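(* Let $E$ be a finite set and $\mathcal{A}$ a set-arrangement on $E$, with local Lie algebras $L_A=\mathcal{F}(A)/\langle R_A\rangle$, $R_A\subseteq[\mathcal{F}(A),\mathcal{F}(A)]$, for $A\in\mathcal{A}$, and let $\mathcal{L}=\mathcal{F}(E)/\langle R\rangle$ with $$R=\bigcup_{A\in\mathcal{A}}R_A\ \cup\ \{[x,y]:\ x,y\in E,\ \{x,y\}\not\subseteq A \text{ for every } A\in\mathcal{A}\}.$$ Let $\mathcal{B}_1,\dots,\mathcal{B}_k$ be pairwise disjoint subsets of $\mathcal{A}$, each closed in $\mathcal{A}$, with $\bigcup_{i=1}^k\mathcal{B}_i=\mathcal{A}$. For each $i$ let $\pi_{\mathcal{B}_i}:\mathcal{L}\to L_{\mathcal{B}_i}$ be the Lie homomorphism sending the elements of $E\setminus\mathrm{supp}(\mathcal{B}_i)$ to $0$ and fixing those of $\mathrm{supp}(\mathcal{B}_i)$, and $s_{\mathcal{B}_i}:L_{\mathcal{B}_i}\to\mathcal{L}$ the Lie homomorphism induced by the inclusion $\mathrm{supp}(\mathcal{B}_i)\subseteq E$. Let $\pi'_{\mathcal{B}_i}$, $s'_{\mathcal{B}_i}$ be their restrictions to the derived algebras, and let $J$ be the kernel of the surjective Lie homomorphism $\bigoplus_{i=1}^k\pi'_{\mathcal{B}_i}:\mathcal{L}'\to\bigoplus_{i=1}^kL'_{\mathcal{B}_i}$. Then: (1) $J$ is generated as an ideal of $\mathcal{L}$ by the elements $[x,s'_{\mathcal{B}_i}(u)]$ for $i=1,\dots,k$,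 $u\in L'_{\mathcal{B}_i}$ and $x\in E\setminus\mathrm{supp}(\mathcal{B}_i)$; (2) $J=0$ if and only if $[x,s'_{\mathcal{B}_i}(L'_{\mathcal{B}_i})]=0$ for all $i$ and all $x\in E\setminus\mathrm{supp}(\mathcal{B}_i)$.
   Context: All Lie algebras are over a fixed field; $\mathcal{F}(X)$ is the free Lie algebra on $X$, $\langle S\rangle$ the ideal generated by $S$, and $M'=[M,M]$ the derived algebra. A set-arrangement on a finite set $E$ is a set $\mathcal{A}$ of subsets of $E$ with $|A|\ge3$ for all $A\in\mathcal{A}$ and $|A\cap B|\le1$ for distinct $A,B\in\mathcal{A}$. For $\mathcal{B}\subseteq\mathcal{A}$ put $\mathrm{supp}(\mathcal{B})=\bigcup_{B\in\mathcal{B}}B$; $\mathcal{B}$ is closed in $\mathcal{A}$ if $|A\cap\mathrm{supp}(\mathcal{B})|\le1$ for all $A\in\mathcal{A}\setminus\mathcal{B}$. For such $\mathcal{B}$, $L_{\mathcal{B}}=\mathcal{F}(\mathrm{supp}(\mathcal{B}))/\langle R_{\mathcal{B}}\rangle$ where $R_{\mathcal{B}}=\bigcup_{B\in\mathcal{B}}R_B\cup\{[x,y]:\ x,y\in\mathrm{supp}(\mathcal{B}),\ \{x,y\}\not\subseteq B\text{ for all }B\in\mathcal{B}\}$. Elements of $E$ are identified with their images in $\mathcal{L}$. *)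

(* Defs.v *)
(* Lie algebras over a field K, presented Lie algebras via
   formal Lie terms modulo "equality in every Lie algebra satisfying the
   relations" (= equality in F(X)/<R>). *)
From HB Require Import structures.
From mathcomp Require Import all_boot all_order all_algebra.
Set Implicit Arguments. Unset Strict Implicit. Unset Printing Implicit Defensive.
Import GRing.Theory.
Local Open Scope ring_scope.

Record lieAlg (K : fieldType) := LieAlg {
  lie_car :> lmodType K;
  lie_br : lie_car -> lie_car -> lie_car;
  lie_brDl : forall (a : K) (x y z : lie_car),
      lie_br (a *: x + y) z = a *: lie_br x z + lie_br y z;
  lie_brDr : forall (a : K) (x y z : lie_car),
      lie_br x (a *: y + z) = a *: lie_br x y + lie_br x z;
  lie_brxx : forall x : lie_car, lie_br x x = 0;
  lie_jacobi : forall x y z : lie_car,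
      lie_br x (lie_br y z) + lie_br y (lie_br z x) + lie_br z (lie_br x y) = 0 }.

Inductive lterm (K T : Type) :=
| LGen of T
| LZero
| LAdd of lterm K T & lterm K T
| LScale of K & lterm K T
| LBr of lterm K T & lterm K T.
Arguments LZero {K T}.
Arguments LGen {K T} _.
Arguments LAdd {K T} _ _.
Arguments LScale {K T} _ _.
Arguments LBr {K T} _ _.

Section Terms.
Variables (K : fieldType) (E : finType).
Local Notation term := (lterm K E).

Fixpoint leval (M : lieAlg K) (f : E -> M) (t : term) : M :=
  match t with
  | LGen x => f x
  | LZero => 0
  | LAdd a b => leval f a + leval f b
  | LScale c a => c *: leval f a
  | LBr a b => lie_br (leval f a) (leval f b)
  end.

Fixpoint lsubst (g : E -> term) (t : term) : term :=
  match t with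
  | LGen x => g x
  | LZero => LZero
  | LAdd a b => LAdd (lsubst g a) (lsubst g b)
  | LScale c a => LScale c (lsubst g a)
  | LBr a b => LBr (lsubst g a) (lsubst g b)
  end.

(* t only involves generators from S, i.e. t represents an element of F(S) *)
Fixpoint onS (S : {set E}) (t : term) : bool :=
  match t with
  | LGen x => x \in S
  | LZero => true
  | LAdd a b => onS S a && onS S b
  | LScale _ a => onS S a
  | LBr a b => onS S a && onS S b
  end.

Definition rels := term -> Prop.

Definition models (M : lieAlg K) (f : E -> M) (R : rels) : Prop :=
  forall r, R r -> leval f r = 0.

(* t = u in F(E)/<R> (for terms over S, and relators over S, this is
   equality in F(S)/<R>) *)
Definition lequiv (R : rels) (t u : term) : Prop :=
  forall (M : lieAlg K) (f : E -> M), models f R -> leval f t = leval f u.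

Definition noRels : rels := fun _ => False.

Definition sumBr (ps : seq (term * term)) : term :=
  foldr (fun p acc => LAdd (LBr p.1 p.2) acc) LZero ps.

(* t (over S) lies in the derived algebra [M,M] of M = F(S)/<R>:
   it is a sum of brackets of elements of M. *)
Definition inDerived (R : rels) (S : {set E}) (t : term) : Prop :=
  exists ps : seq (term * term),
    all (fun p => onS S p.1 && onS S p.2) ps /\ lequiv R t (sumBr ps).

(* I is an ideal of F(E)/<R> (as a set of representing terms) *)
Definition isIdeal (R : rels) (I : term -> Prop) : Prop :=
  [/\ (forall t u, lequiv R t u -> I t -> I u),
      I LZero,
      (forall t u, I t -> I u -> I (LAdd t u)),
      (forall c t, I t -> I (LScale c t)) &
      (forall t u, I t -> I (LBr u t))].

Definition idealGen (R : rels) (G : term -> Prop) (t : term) : Prop :=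
  forall I, isIdeal R I -> (forall g, G g -> I g) -> I t.

Definition set_arrangement (Ar : {set {set E}}) : Prop :=
  (forall A, A \in Ar -> 3 <= #|A|)%N /\
  (forall A B, A \in Ar -> B \in Ar -> A != B -> #|A :&: B| <= 1)%N.

Definition supp (Bs : {set {set E}}) : {set E} := \bigcup_(B in Bs) B.

Definition closed_in (Bs Ar : {set {set E}}) : Prop :=
  Bs \subset Ar /\ (forall A, A \in Ar -> A \notin Bs -> #|A :&: supp Bs| <= 1)%N.

Definition RB (RA : {set E} -> rels) (Bs : {set {set E}}) : rels :=
  fun r => (exists2 B, B \in Bs & RA B r) \/
    exists x y, [/\ x \in supp Bs, y \in supp Bs,
      (forall B, B \in Bs -> ~ (x \in B /\ y \in B)) &
      r = LBr (LGen x) (LGen y)].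

Definition Rglob (RA : {set E} -> rels) (Ar : {set {set E}}) : rels :=
  fun r => (exists2 A, A \in Ar & RA A r) \/
    exists x y, (forall A, A \in Ar -> ~ (x \in A /\ y \in A)) /\
      r = LBr (LGen x) (LGen y).

Definition piB (Bs : {set {set E}}) (t : term) : term :=
  lsubst (fun x => if x \in supp Bs then LGen x else LZero) t.

End Terms.

(* Main.v *)
Require Import Defs.
From mathcomp Require Import all_boot all_order all_algebra.
Set Implicit Arguments. Unset Strict Implicit. Unset Printing Implicit Defensive.
Import GRing.Theory.
Local Open Scope ring_scope.

Section Lie.
Variables (K : fieldType) (M : lieAlg K).
Implicit Types x y z : M.
Local Notation br := (@lie_br K M).

Lemma br0l z : br 0 z = 0.
Proof.
have := lie_brDl 1 0 0 z; rewrite !scale1r addr0 => h.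
by apply/(addrI (br 0 z)); rewrite addr0 -h.
Qed.
Lemma br0r z : br z 0 = 0.
Proof.
have := lie_brDr 1 z 0 0; rewrite !scale1r addr0 => h.
by apply/(addrI (br z 0)); rewrite addr0 -h.
Qed.
Lemma brDl x y z : br (x + y) z = br x z + br y z.
Proof. by have := lie_brDl 1 x y z; rewrite !scale1r. Qed.
Lemma brDr x y z : br z (x + y) = br z x + br z y.
Proof. by have := lie_brDr 1 z x y; rewrite !scale1r. Qed.
Lemma brZl (a : K) x z : br (a *: x) z = a *: br x z.
Proof. by have := lie_brDl a x 0 z; rewrite !addr0 br0l addr0. Qed.
Lemma brZr (a : K) x z : br z (a *: x) = a *: br z x.
Proof. by have := lie_brDr a z x 0; rewrite !addr0 br0r addr0. Qed.
Lemma brN x y : br x y = - br y x.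
Proof.
have := lie_brxx (x + y); rewrite brDl !brDr !lie_brxx add0r addr0 => /eqP.
by rewrite addr_eq0 => /eqP.
Qed.
Lemma br_sumr (I : Type) (r : seq I) (F : I -> M) z :
  br z (\sum_(i <- r) F i) = \sum_(i <- r) br z (F i).
Proof.
elim: r => [|i r IH]; first by rewrite !big_nil br0r.
by rewrite !big_cons brDr IH.
Qed.
Lemma brNr x z : br z (- x) = - br z x.
Proof. by rewrite -scaleN1r brZr scaleN1r. Qed.
Lemma br_jac1 x y z : br (br x y) z = br x (br y z) - br y (br x z).
Proof.
have h := lie_jacobi z x y.
rewrite (brN z) (brN z x) brNr in h.
by move/eqP: h; rewrite -addrA addrC addr_eq0 opprK => /eqP.
Qed.
Lemma br_jac2 x y z : br x (br y z) = br y (br x z) - br z (br x y).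
Proof.
have h := lie_jacobi x y z.
rewrite (brN z x) brNr in h.
by move/eqP: h; rewrite -addrA addr_eq0 opprD opprK => /eqP.
Qed.
End Lie.

Section Terms2.
Variables (K : fieldType) (E : finType).
Local Notation term := (lterm K E).
Implicit Types (t u : term) (S : {set E}) (R : rels K E).

Lemma onS_setT t : onS setT t.
Proof. by elim: t => [x||a IHa b IHb|c a IH|a IHa b IHb] /=; rewrite ?in_setT ?IHa ?IHb ?IH. Qed.

Lemma onS_sub S S' t : S \subset S' -> onS S t -> onS S' t.
Proof.
move=> sub; elim: t => [x||a IHa b IHb|c a IH|a IHa b IHb] /=.
- by move/(subsetP sub).
- by [].
- by case/andP=> /IHa -> /IHb ->.
- exact: IH.
- by case/andP=> /IHa -> /IHb ->.
Qed.

Lemma leval_eq_on (M : lieAlg K) (g g' : E -> M) S t :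
  (forall x, x \in S -> g x = g' x) -> onS S t -> leval g t = leval g' t.
Proof.
move=> eqg; elim: t => [x||a IHa b IHb|c a IH|a IHa b IHb] /=.
- exact: eqg.
- by [].
- by case/andP=> /IHa -> /IHb ->.
- by move/IH ->.
- by case/andP=> /IHa -> /IHb ->.
Qed.

Lemma leval_lsubst (M : lieAlg K) (f : E -> M) (g : E -> term) t :
  leval f (lsubst g t) = leval (fun x => leval f (g x)) t.
Proof. by elim: t => [x||a /= -> b ->|c a /= ->|a /= -> b ->]. Qed.

Lemma leval_sumBr (M : lieAlg K) (f : E -> M) ps :
  leval f (sumBr ps) = \sum_(p <- ps) lie_br (leval f p.1) (leval f p.2).
Proof. by elim: ps => [|p ps IH]; rewrite ?big_nil ?big_cons //= IH. Qed.

Lemma br_commute (M : lieAlg K) (g : E -> M) S :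
  (forall x y, x \in S -> y \in S -> lie_br (g x) (g y) = 0) ->
  forall a b, onS S a -> onS S b -> lie_br (leval g a) (leval g b) = 0.
Proof.
move=> hc.
have gen : forall x b, x \in S -> onS S b -> lie_br (g x) (leval g b) = 0.
  move=> x b xS; elim: b => [y||a IHa b IHb|c a IH|a IHa b IHb] /=.
  - exact: hc.
  - by rewrite br0r.
  - by case/andP=> /IHa ha /IHb hb; rewrite brDr ha hb addr0.
  - by move/IH=> h; rewrite brZr h scaler0.
  - case/andP=> ha hb; rewrite br_jac2 (IHb hb) (IHa ha) !br0r subr0 //.
elim=> [x||a IHa b IHb|d a IH|a IHa b IHb] c /=.
- by move=> xS hc'; exact: gen.
- by rewrite br0l.
- by case/andP=> ha hb hc'; rewrite brDl IHa // IHb // addr0.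
- by move=> ha hc'; rewrite brZl IH // scaler0.
- by case/andP=> ha hb hc'; rewrite IHa // br0l.
Qed.

Lemma sumBr_commute (M : lieAlg K) (g : E -> M) S ps :
  (forall x y, x \in S -> y \in S -> lie_br (g x) (g y) = 0) ->
  all (fun p => onS S p.1 && onS S p.2) ps -> leval g (sumBr ps) = 0.
Proof.
move=> hc; rewrite leval_sumBr; elim: ps => [|p ps IH]; rewrite ?big_nil ?big_cons //=.
by case/andP=> /andP[h1 h2] /IH ->; rewrite (br_commute hc) // add0r.
Qed.

Lemma inDerived_zero R S : inDerived R S (@LZero K E).
Proof. by exists [::]; split. Qed.

Lemma inDerived_equiv R S t u : lequiv R t u -> inDerived R S t -> inDerived R S u.
Proof.
move=> e [ps [hps e2]]; exists ps; split=> // M f hf; by rewrite -(e M f hf) e2.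
Qed.

Lemma inDerived_add R S t u : inDerived R S t -> inDerived R S u -> inDerived R S (LAdd t u).
Proof.
move=> [ps [hps e]] [qs [hqs e']]; exists (ps ++ qs); split.
  by rewrite all_cat hps hqs.
move=> M f hf /=; rewrite e // e' // !leval_sumBr big_cat //.
Qed.

Lemma inDerived_scale R S c t : inDerived R S t -> inDerived R S (LScale c t).
Proof.
move=> [ps [hps e]]; exists [seq (LScale c p.1, p.2) | p <- ps]; split.
  by rewrite all_map; apply: sub_all hps => p /=.
move=> M f hf /=; rewrite e // !leval_sumBr big_map scaler_sumr.
by apply: eq_bigr => p _ /=; rewrite brZl.
Qed.

Lemma inDerived_br R S a b : onS S a -> onS S b -> inDerived R S (LBr a b).
Proof.
move=> ha hb; exists [:: (a, b)]; split; first by rewrite /= ha hb.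
by move=> M f hf /=; rewrite addr0.
Qed.

End Terms2.

Section Main.
Variables (K : fieldType) (E : finType) (Ar : {set {set E}})
  (RA : {set E} -> rels K E) (k : nat) (B : 'I_k -> {set {set E}}).
Hypotheses
  (HRA : forall A, A \in Ar -> forall r, RA A r -> onS A r /\ inDerived (@noRels K E) A r)
  (Hdisj : forall i j, i != j -> [disjoint B i & B j])
  (Hcl : forall i, closed_in (B i) Ar)
  (Hcup : \bigcup_(i < k) B i = Ar).
Local Notation term := (lterm K E).
Local Notation R := (Rglob RA Ar).
Local Notation S i := (supp (B i)).
Local Notation RBi i := (RB RA (B i)).

Lemma in_supp (Bs : {set {set E}}) B0 x : B0 \in Bs -> x \in B0 -> x \in supp Bs.
Proof. by move=> h1 h2; apply/bigcupP; exists B0. Qed.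

Lemma F_in_B A : A \in Ar -> exists i, A \in B i.
Proof. by rewrite -Hcup => /bigcupP [i _ h]; exists i. Qed.

Lemma F_notboth i j B0 x y : i != j -> B0 \in B j -> x \in S i -> y \in S i ->
  x \in B0 -> y \in B0 -> x = y.
Proof.
move=> ij hB0 hx hy hx0 hy0.
have hA : B0 \in Ar by apply: (subsetP (Hcl j).1).
have hn : B0 \notin B i by rewrite (disjointFl (Hdisj ij) hB0).
have /card_le1_eqP h := (Hcl i).2 B0 hA hn.
by apply: h; rewrite inE ?hx ?hy ?hx0 ?hy0.
Qed.

Lemma models_RB i (M : lieAlg K) (f : E -> M) : models f R -> models f (RBi i).
Proof.
move=> hf r [[B0 hB0 hr] | [x [y [hx hy hnot ->]]]].
  by apply: hf; left; exists B0 => //; apply: (subsetP (Hcl i).1).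
case: (eqVneq x y) => [<-|xy]; first by rewrite /= lie_brxx.
apply: hf; right; exists x, y; split => // A hA [hxA hyA].
have [l hl] := F_in_B hA.
case: (eqVneq i l) => [eil|il]; first by subst l; exact: (hnot A hl).
by move: xy; rewrite (F_notboth il hl hx hy hxA hyA) eqxx.
Qed.

Lemma lequiv_RB i t u : lequiv (RBi i) t u -> lequiv R t u.
Proof. by move=> e M f hf; apply: e; apply: models_RB. Qed.

Definition proj j (M : lieAlg K) (f : E -> M) : E -> M :=
  fun x => if x \in S j then f x else 0.

Lemma noRels_models (M : lieAlg K) (f : E -> M) : models f (@noRels K E).
Proof. by move=> r []. Qed.

Lemma models_proj j (M : lieAlg K) (f : E -> M) :
  models f (RBi j) -> models (proj j f) R.
Proof.
move=> hf r [[A hA hr] | [x [y [hnot ->]]]].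
  have [onA [ps [hps e]]] := HRA hA hr.
  case: (boolP (A \in B j)) => hAj.
    rewrite (@leval_eq_on _ _ _ _ f A) //; first by apply: hf; left; exists A.
    by move=> x hx; rewrite /proj (in_supp hAj hx).
  rewrite (e _ _ (noRels_models _)); apply: (sumBr_commute (S := A)) => // x y hx hy.
  rewrite /proj; case: ifP => hxs; case: ifP => hys; rewrite ?br0l ?br0r //.
  have /card_le1_eqP h := (Hcl j).2 A hA hAj.
  by rewrite (h x y) ?lie_brxx // inE ?hx ?hy ?hxs ?hys.
rewrite /= /proj; case: ifP => hx; case: ifP => hy; rewrite ?br0l ?br0r //.
apply: (hf (LBr (LGen x) (LGen y))); right; exists x, y; split => // B0 hB0 [hx0 hy0].
by apply: (hnot B0) => //; apply: (subsetP (Hcl j).1).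
Qed.

Lemma piB_eval j (M : lieAlg K) (f : E -> M) t :
  leval f (piB (B j) t) = leval (proj j f) t.
Proof.
rewrite /piB leval_lsubst; apply: (@leval_eq_on _ _ _ _ _ setT); last exact: onS_setT.
by move=> x _; rewrite /proj; case: ifP.
Qed.

Definition good i (u : term) := onS (S i) u /\ inDerived (RBi i) (S i) u.

Lemma cross i j (M : lieAlg K) (f : E -> M) u : i != j -> models f (RBi j) ->
  good i u -> leval (proj j f) u = 0.
Proof.
move=> ij hf [hu [ps [hps e]]].
rewrite e; last by apply: models_RB; apply: models_proj.
apply: (sumBr_commute (S := S i)) => // x y hx hy.
rewrite /proj; case: ifP => hxs; case: ifP => hys; rewrite ?br0l ?br0r //.
case: (eqVneq x y) => [<-|xy]; first by rewrite lie_brxx.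
apply: (hf (LBr (LGen x) (LGen y))); right; exists x, y; split => // B0 hB0 [hx0 hy0].
by move: xy; rewrite (F_notboth ij hB0 hx hy hx0 hy0) eqxx.
Qed.

Definition Kj j (t : term) := lequiv (RBi j) (piB (B j) t) LZero.

Lemma isIdeal_K j : isIdeal R (Kj j).
Proof.
split.
- move=> t u e h M f hf; rewrite piB_eval -(e _ _ (models_proj hf)) -piB_eval.
  exact: h.
- by [].
- by move=> t u ht hu M f hf /=; rewrite /= ht // hu // addr0.
- by move=> c t ht M f hf /=; rewrite ht // scaler0.
- by move=> t u ht M f hf /=; rewrite ht // br0r.
Qed.

Lemma isIdeal_D : isIdeal R (inDerived R setT).
Proof.
split.
- by move=> t u e h; apply: inDerived_equiv e h.
- exact: inDerived_zero.
- by move=> t u; apply: inDerived_add.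
- by move=> c t; apply: inDerived_scale.
- by move=> t u _; apply: inDerived_br; apply: onS_setT.
Qed.

Definition Jd (t : term) := inDerived R setT t /\
             forall i, lequiv (RBi i) (piB (B i) t) LZero.

Definition Gd (g : term) := exists i u x,
             [/\ x \notin supp (B i), onS (supp (B i)) u,
                 inDerived (RB RA (B i)) (supp (B i)) u &
                 g = LBr (LGen x) u].

Lemma isIdeal_J : isIdeal R Jd.
Proof.
have [a1 a2 a3 a4 a5] := isIdeal_D.
split.
- move=> t u e [h1 h2]; split; first exact: a1 e h1.
  by move=> i; have [b1 _ _ _ _] := isIdeal_K i; exact: (b1 t u e (h2 i)).
- split; first exact: a2.
  by move=> i; have [_ b2 _ _ _] := isIdeal_K i.
- move=> t u [h1 h2] [h3 h4]; split; first exact: a3.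
  by move=> i; have [_ _ b3 _ _] := isIdeal_K i; exact: (b3 t u (h2 i) (h4 i)).
- move=> c t [h1 h2]; split; first exact: a4.
  by move=> i; have [_ _ _ b4 _] := isIdeal_K i; exact: (b4 c t (h2 i)).
- move=> t u [h1 h2]; split; first exact: a5.
  by move=> i; have [_ _ _ _ b5] := isIdeal_K i; exact: (b5 t u (h2 i)).
Qed.

Lemma G_J g : Gd g -> Jd g.
Proof.
move=> [i [u [x [hx hu hd ->]]]]; split.
  by apply: inDerived_br; apply: onS_setT.
move=> j M f hf; rewrite piB_eval /=.
case: (eqVneq i j) => [<-|ij].
  by rewrite {1}/proj (negbTE hx) br0l.
by rewrite (cross ij hf) ?br0r.
Qed.

Lemma IG_J t : idealGen R Gd t -> Jd t.
Proof. by move=> h; apply: h; [exact: isIdeal_J | exact: G_J]. Qed.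


Definition sumT (u : 'I_k -> term) : term :=
  foldr (fun i acc => LAdd (u i) acc) LZero (index_enum 'I_k).

Lemma leval_sumT (M : lieAlg K) (f : E -> M) u :
  leval f (sumT u) = \sum_(i <- index_enum 'I_k) leval f (u i).
Proof.
by rewrite /sumT; elim: (index_enum _) => [|i s IH]; rewrite ?big_nil ?big_cons //= IH.
Qed.

Lemma IG_ideal : isIdeal R (idealGen R Gd).
Proof.
split.
- move=> t u e h I hI hG; have [c1 _ _ _ _] := hI; exact: c1 t u e (h I hI hG).
- by move=> I [_ c2 _ _ _] _.
- move=> t u ht hu I hI hG; have [_ _ c3 _ _] := hI.
  exact: c3 _ _ (ht I hI hG) (hu I hI hG).
- move=> c t ht I hI hG; have [_ _ _ c4 _] := hI; exact: c4 _ _ (ht I hI hG).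
- move=> t u ht I hI hG; have [_ _ _ _ c5] := hI; exact: c5 _ _ (ht I hI hG).
Qed.

Lemma IG_gen g : Gd g -> idealGen R Gd g.
Proof. by move=> h I _ hG; apply: hG. Qed.

Lemma IG_sumT u : (forall i, idealGen R Gd (u i)) -> idealGen R Gd (sumT u).
Proof.
move=> h; have [_ c2 c3 _ _] := IG_ideal; rewrite /sumT.
by elim: (index_enum _) => //= i s IH; apply: c3.
Qed.

Definition V (t : term) := exists u n, (forall i, good i (u i)) /\ idealGen R Gd n /\ lequiv R t (LAdd (sumT u) n).

Lemma V_equiv t t' : lequiv R t t' -> V t -> V t'.
Proof.
move=> e [u [n [hg [hn e2]]]]; exists u, n; split => //; split => // M f hf.
by rewrite -(e M f hf); apply: e2.
Qed.

Lemma good_zero i : good i LZero.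
Proof. by split => //; apply: inDerived_zero. Qed.

Lemma V_zero : V LZero.
Proof.
have [_ c2 _ _ _] := IG_ideal.
exists (fun _ => LZero), LZero; split; first by move=> i; apply: good_zero.
split => // M f hf /=; rewrite leval_sumT big1 ?addr0 //.
Qed.

Lemma V_add t t' : V t -> V t' -> V (LAdd t t').
Proof.
move=> [u1 [n1 [g1 [i1 e1]]]] [u2 [n2 [g2 [i2 e2]]]].
have [_ _ c3 _ _] := IG_ideal.
exists (fun i => LAdd (u1 i) (u2 i)), (LAdd n1 n2); split.
  move=> i; have [o1 d1] := g1 i; have [o2 d2] := g2 i.
  by split; [rewrite /= o1 o2 | apply: inDerived_add].
split; first exact: c3.
move=> M f hf /=; rewrite e1 // e2 // /= !leval_sumT /= big_split /=.
by rewrite addrACA.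
Qed.

Lemma V_scale c t : V t -> V (LScale c t).
Proof.
move=> [u1 [n1 [g1 [i1 e1]]]].
have [_ _ _ c4 _] := IG_ideal.
exists (fun i => LScale c (u1 i)), (LScale c n1); split.
  move=> i; have [o1 d1] := g1 i.
  by split; [rewrite /= o1 | apply: inDerived_scale].
split; first exact: c4.
move=> M f hf /=; rewrite e1 // /= !leval_sumT /= scalerDr scaler_sumr //.
Qed.

Lemma V_brgen x v : V v -> V (LBr (LGen x) v).
Proof.
move=> [u [n [hg [hn e]]]].
have [_ c2 c3 _ c5] := IG_ideal.
exists (fun i => if x \in S i then LBr (LGen x) (u i) else LZero),
  (LAdd (LBr (LGen x) n)
     (sumT (fun i => if x \in S i then LZero else LBr (LGen x) (u i)))).
split.
  move=> i; case: ifP => hx; last exact: good_zero.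
  have [o d] := hg i.
  by split; [rewrite /= hx o | apply: inDerived_br; rewrite //= hx].
split.
  apply: c3; first exact: c5.
  apply: IG_sumT => i; case: ifP => hx; first exact: c2.
  apply: IG_gen; exists i, (u i), x; have [o d] := hg i.
  by split => //; rewrite hx.
move=> M f hf /=; rewrite e // /= brDr !leval_sumT br_sumr.
have -> : \sum_(i <- index_enum 'I_k) lie_br (f x) (leval f (u i)) =
  \sum_(i <- index_enum 'I_k) leval f (if x \in S i then LBr (LGen x) (u i) else LZero) +
  \sum_(i <- index_enum 'I_k) leval f (if x \in S i then LZero else LBr (LGen x) (u i)).
  by rewrite -big_split; apply: eq_bigr => i _ /=; case: ifP => _ /=; rewrite ?addr0 ?add0r.
by rewrite -addrA (addrC (lie_br (f x) (leval f n))).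
Qed.

Lemma V_base x y : V (LBr (LGen x) (LGen y)).
Proof.
case: (boolP [exists A in Ar, (x \in A) && (y \in A)]).
  case/existsP => A /andP [hA /andP [hx hy]]; have [i hi] := F_in_B hA.
  have [_ c2 _ _ _] := IG_ideal.
  exists (fun j => if j == i then LBr (LGen x) (LGen y) else LZero), LZero.
  split.
    move=> j; case: eqP => [->|_]; last exact: good_zero.
    split; first by rewrite /= (in_supp hi hx) (in_supp hi hy).
    by apply: inDerived_br; rewrite /= ?(in_supp hi hx) ?(in_supp hi hy).
  split => // M f hf /=.
  rewrite leval_sumT (bigD1_seq i) ?mem_index_enum ?index_enum_uniq //= eqxx.
  by rewrite big1 ?addr0 // => j /negbTE ->.
move=> hn; apply: (V_equiv _ V_zero) => M f hf /=; symmetry.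
apply: (hf (LBr (LGen x) (LGen y))); right; exists x, y; split => // A hA [hx hy].
by move/negP: hn; apply; apply/existsP; exists A; rewrite hA hx hy.
Qed.

Lemma Winv a : forall v, V v -> V (LBr a v).
Proof.
elim: a => [x||a IHa b IHb|c a IH|a IHa b IHb] v hv.
- exact: V_brgen.
- by apply: (V_equiv _ V_zero) => M f hf /=; rewrite br0l.
- by apply: (V_equiv _ (V_add (IHa v hv) (IHb v hv))) => M f hf /=; rewrite brDl.
- by apply: (V_equiv _ (V_scale c (IH v hv))) => M f hf /=; rewrite brZl.
- apply: (V_equiv _ (V_add (IHa _ (IHb v hv)) (V_scale (-1) (IHb _ (IHa v hv))))).
  by move=> M f hf /=; rewrite br_jac1 scaleN1r.
Qed.

Lemma Dgen c : forall x, V (LBr (LGen x) c).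
Proof.
elim: c => [y||a IHa b IHb|d a IH|a IHa b IHb] x.
- exact: V_base.
- by apply: (V_equiv _ V_zero) => M f hf /=; rewrite br0r.
- by apply: (V_equiv _ (V_add (IHa x) (IHb x))) => M f hf /=; rewrite brDr.
- by apply: (V_equiv _ (V_scale d (IH x))) => M f hf /=; rewrite brZr.
- apply: (V_equiv _ (V_add (Winv a (IHb x)) (V_scale (-1) (Winv b (IHa x))))).
  by move=> M f hf /=; rewrite (br_jac2 (f x)) scaleN1r.
Qed.

Lemma Vbr a : forall c, V (LBr a c).
Proof.
elim: a => [x||a IHa b IHb|d a IH|a IHa b IHb] c.
- exact: Dgen.
- by apply: (V_equiv _ V_zero) => M f hf /=; rewrite br0l.
- by apply: (V_equiv _ (V_add (IHa c) (IHb c))) => M f hf /=; rewrite brDl.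
- by apply: (V_equiv _ (V_scale d (IH c))) => M f hf /=; rewrite brZl.
- apply: (V_equiv _ (V_scale (-1) (Winv c (IHa b)))).
  by move=> M f hf /=; rewrite scaleN1r -brN.
Qed.

Lemma V_sumBr ps : V (sumBr ps).
Proof. by elim: ps => [|p ps IH] /=; [exact: V_zero | apply: V_add => //; apply: Vbr]. Qed.

Lemma J_IG t : Jd t -> idealGen R Gd t.
Proof.
move=> ht; have [[ps [_ eps]] hK] := ht.
have [u [n [hg [hn e]]]] : V t.
  by apply: (V_equiv _ (V_sumBr ps)) => M f hf; rewrite eps.
have hu : forall j, lequiv (RBi j) (u j) LZero.
  move=> j M f hf; have := hK j M f hf; rewrite piB_eval /= => h.
  have hn0 : leval (proj j f) n = 0.
    by have := (IG_J hn).2 j M f hf; rewrite piB_eval.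
  rewrite (e _ _ (models_proj hf)) /= hn0 addr0 leval_sumT in h.
  rewrite (bigD1_seq j) ?mem_index_enum ?index_enum_uniq //= big1 ?addr0 in h.
    rewrite -h /=; apply: (@leval_eq_on _ _ _ _ _ (S j)); last by case: (hg j).
    by move=> x hx; rewrite /proj hx.
  by move=> i hi; apply: (cross hi hf (hg i)).
have [c1 _ _ _ _] := IG_ideal; apply: (c1 n) hn => M f hf.
rewrite e //= leval_sumT big1 ?add0r // => i _.
exact: (lequiv_RB (hu i) hf).
Qed.

End Main.

Theorem mainTheorem2 (K : fieldType) (E : finType) (Ar : {set {set E}})
  (RA : {set E} -> rels K E) (k : nat) (B : 'I_k -> {set {set E}}) :
  set_arrangement Ar ->
  (forall A, A \in Ar -> forall r, RA A r -> onS A r /\ inDerived (@noRels K E) A r) ->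
  (forall i j, i != j -> [disjoint B i & B j]) ->
  (forall i, closed_in (B i) Ar) ->
  \bigcup_(i < k) B i = Ar ->
  let R := Rglob RA Ar in
  let J := fun t => inDerived R setT t /\
             forall i, lequiv (RB RA (B i)) (piB (B i) t) LZero in
  let G := fun g => exists i u x,
             [/\ x \notin supp (B i), onS (supp (B i)) u,
                 inDerived (RB RA (B i)) (supp (B i)) u &
                 g = LBr (LGen x) u] in
  (forall t, J t <-> idealGen R G t) /\
  ((forall t, J t -> lequiv R t LZero) <->
   (forall i x u, x \notin supp (B i) -> onS (supp (B i)) u ->
      inDerived (RB RA (B i)) (supp (B i)) u ->
      lequiv R (LBr (LGen x) u) LZero)).
Proof.
move=> _ HRA Hdisj Hcl Hcup R J G; split.
  move=> t; split.
    exact: (J_IG HRA Hdisj Hcl Hcup).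
  exact: (IG_J HRA Hdisj Hcl Hcup).
split.
  move=> h i x u hx hu hd; apply: h.
  apply: (IG_J HRA Hdisj Hcl Hcup); apply: IG_gen; exists i, u, x; by split.
move=> h t ht; apply: ((J_IG HRA Hdisj Hcl Hcup ht) (fun t => lequiv R t LZero)).
  split.
  - by move=> a b e ha M f hf; rewrite -(e M f hf); apply: ha.
  - by [].
  - by move=> a b ha hb M f hf /=; rewrite ha // hb // addr0.
  - by move=> c a ha M f hf /=; rewrite ha // scaler0.
  - by move=> a b ha M f hf /=; rewrite ha // br0r.
move=> g; rewrite /Gd => -[i [u [x [hx hu hd ->]]]]; exact: (h i x u hx hu hd).
Qed.
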